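(* For every $c\geq1$ let $L_c=(1,1,c)$. Then for every $n>2$, $\lim_{c\to\infty}\rho_{n,L_c}=\frac{n-2}{n}$.
   Context: Let $X$ be a finite alphabet with $n\geq 2$ letters and $X^*$ the set of words over $X$; $|v|$ is the length of a word $v$. A code over $X$ is a finite sequence $C=(v_1,\ldots,v_m)$ of words over $X$ such that every $w\in X^*$ has at most one factorization into code-words: if $w=v_{i_1}\cdots v_{i_l}=v_{j_1}\cdots v_{j_{l'}}$ with $l,l'\geq1$, then $l=l'$ and $i_t=j_t$ for all $t$. (Codes are sequences, not sets.) A code $C=(v_1,\ldots,v_m)$ is a prefix code if for all $i,j$, $v_i$ is a prefix of $v_j$ if and only if $i=j$. For a finite sequence $L=(a_1,\ldots,a_m)$ of positive integers, $UD_n(L)$ is the set of all codes $(v_1,\ldots,v_m)$ over an $n$-letter alphabet with $|v_i|=a_i$ for all $i$, $PR_n(L)\subseteq UD_n(L)$ is the subset of prefix codes, and $\rho_{n,L}=|PR_n(L)|/|UD_n(L)|$ (defined when $UD_n(L)\ne\emptyset$). *)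

(* Defs.v *)
From HB Require Import structures.
From mathcomp Require Import all_boot all_order all_algebra.
From mathcomp Require Import all_classical all_reals all_analysis.
Set Implicit Arguments. Unset Strict Implicit. Unset Printing Implicit Defensive.
Import Order.TTheory GRing.Theory Num.Theory.

Definition is_code (n : nat) (C : seq (seq 'I_n)) : Prop :=
  forall ix jx : seq nat,
    all (fun i => i < size C) ix -> all (fun j => j < size C) jx ->
    ix != [::] -> jx != [::] ->
    flatten [seq nth [::] C i | i <- ix] = flatten [seq nth [::] C j | j <- jx] ->
    ix = jx.

Definition is_prefix_code (n : nat) (C : seq (seq 'I_n)) : Prop :=
  is_code C /\
  forall i j, i < size C -> j < size C ->
    (prefix (nth [::] C i) (nth [::] C j) <-> i = j).

Definition words_of_len (n k : nat) : seq (seq 'I_n) :=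
  [seq val t | t <- enum {: k.-tuple 'I_n}].

Fixpoint candidates (n : nat) (L : seq nat) : seq (seq (seq 'I_n)) :=
  match L with
  | [::] => [:: [::]]
  | a :: L' => [seq v :: C | v <- words_of_len n a, C <- candidates n L']
  end.

Definition card_UD (n : nat) (L : seq nat) : nat :=
  count (fun C => `[< is_code C >]) (candidates n L).
Definition card_PR (n : nat) (L : seq nat) : nat :=
  count (fun C => `[< is_prefix_code C >]) (candidates n L).

Definition rho (R : realType) (n : nat) (L : seq nat) : R :=
  ((card_PR n L)%:R / (card_UD n L)%:R)%R.

(* Main.v *)
Require Import Defs.
From HB Require Import structures.
From mathcomp Require Import all_boot all_order all_algebra.
From mathcomp Require Import all_classical all_reals all_analysis.
From mathcomp Require Import ring lra.
Import Order.TTheory GRing.Theory Num.Theory numFieldNormedType.Exports.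

Definition qab {n : nat} (a b : 'I_n) (x : 'I_n) := (x == a) || (x == b).
Definition pf {n : nat} (a b : 'I_n) (w : seq 'I_n) :=
  if w is x :: _ then ~~ qab a b x else false.

Section Code.
Variables (n : nat) (a b : 'I_n) (w : seq 'I_n).
Let C := [:: [::a]; [::b]; w].
Local Notation q := (qab a b).
Let flat (ix : seq nat) := flatten [seq nth [::] C i | i <- ix].

Lemma flat_cons i ix : flat (i :: ix) = nth [::] C i ++ flat ix.
Proof. by []. Qed.

Lemma find_flat ix : all (fun i => i < 3) ix -> ~~ all q w ->
  if 2 \in ix then find (predC q) (flat ix) = index 2 ix + find (predC q) w
  else all q (flat ix).
Proof.
move=> Hix Hw; elim: ix Hix => [|i ix IH] //= /andP[Hi Hix].
rewrite flat_cons in_cons find_cat all_cat.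
have hw : has (predC q) w by rewrite has_predC.
move: Hi; case: i => [|[|[|i]]] //= _.
- rewrite /qab eqxx /=; move: (IH Hix); case: (2 \in ix) => //= ->; by rewrite add1n.
- rewrite /qab eqxx orbT /=; move: (IH Hix); case: (2 \in ix) => //= ->; by rewrite add1n.
- by rewrite hw.
Qed.

Lemma code_uniq ix jx : a != b -> ~~ all q w ->
  all (fun i => i < 3) ix -> all (fun j => j < 3) jx ->
  flat ix = flat jx -> ix = jx.
Proof.
move=> Hab Hw.
have wne : w != [::] by case: w Hw.
have hw : has (predC q) w by rewrite has_predC.
have fne : forall i ix, i < 3 -> flat (i :: ix) != [::].
  by move=> i ix'; rewrite flat_cons; case: i => [|[|[|i]]] //= _; move: wne; case: (w).
have mixed : forall i ix jx, i < 2 -> all (fun i => i < 3) ix ->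
    all (fun j => j < 3) jx -> flat (i :: ix) <> flat (2 :: jx).
  move=> i ix' jx' Hi Hix Hjx E.
  have F1 := find_flat ix' Hix Hw.
  have E2 : find (predC q) (flat (2 :: jx')) = find (predC q) w.
    by rewrite flat_cons find_cat hw.
  have hwall : ~~ all q (flat (2 :: jx')) by rewrite flat_cons all_cat negb_and Hw.
  rewrite -E flat_cons in E2 hwall.
  have qi : q (nth a [:: a; b] i).
    by clear -Hi; move: Hi; case: i => [|[|i]] //= _; rewrite /qab eqxx ?orbT.
  have Ei : nth [::] C i = [:: nth a [:: a; b] i] by clear -Hi; move: Hi; case: i => [|[|i]].
  rewrite Ei /= qi /= in E2 hwall.
  move: F1; case: (2 \in ix') => F1.
  - by move: E2; rewrite F1 -addSn => /eqP; rewrite -{2}(add0n (find (predC q) w)) eqn_add2r.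
  - by rewrite F1 in hwall.
elim: ix jx => [|i ix IH] [|j jx] //=.
- by move=> _ /andP[Hj _] E; move: (fne j jx Hj); rewrite -E.
- by move=> /andP[Hi _] _ E; move: (fne i ix Hi); rewrite E.
move=> /andP[Hi Hix] /andP[Hj Hjx].
rewrite !flat_cons.
move: Hi Hj; case: i => [|[|[|i]]] //= _; case: j => [|[|[|j]]] //= _.
- by case=> /IH ->.
- by case=> E; move: Hab; rewrite E eqxx.
- by move=> E; exfalso; apply: (mixed 0 ix jx).
- by case=> E; move: Hab; rewrite E eqxx.
- by case=> /IH ->.
- by move=> E; exfalso; apply: (mixed 1 ix jx).
- by move=> E; exfalso; apply: (mixed 0 jx ix).
- by move=> E; exfalso; apply: (mixed 1 jx ix).
- move=> E; have: drop (size w) (w ++ flat ix) = drop (size w) (w ++ flat jx) by rewrite E.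
  by rewrite !drop_size_cat // => /IH ->.
Qed.

Lemma flat_letters s : all q s ->
  flat [seq (if x == a then 0 else 1) | x <- s] = s.
Proof.
elim: s => [|x s IH] //= /andP[qx Hs].
rewrite flat_cons IH //.
by case: ifP => [/eqP -> //| /negbT xa]; move: qx; rewrite /qab (negbTE xa) /= => /eqP ->.
Qed.

Lemma is_code_iff : w != [::] -> is_code C <-> (a != b) && ~~ all q w.
Proof.
move=> wne; split.
- move=> H; apply/andP; split.
    apply/negP => /eqP Eab.
    by have := H [:: 0] [:: 1] isT isT isT isT; rewrite /= Eab => /(_ erefl).
  apply/negP => Hall.
  have := H [:: 2] [seq (if x == a then 0 else 1) | x <- w] isT.
  have -> : all (fun j => j < size C) [seq (if x == a then 0 else 1) | x <- w].
    by apply/allP => j /mapP[x _ ->]; case: ifP.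
  have jne : [seq (if x == a then 0 else 1) | x <- w] != [::] by move: wne; case: (w).
  move=> /(_ isT isT jne).
  have -> : flatten [seq nth [::] C j | j <- [:: 2]] = w by rewrite /= cats0.
  move=> /(_ (esym (flat_letters w Hall))) E.
  have : 2 \in [seq (if x == a then 0 else 1) | x <- w] by rewrite -E.
  by case/mapP=> x _; case: ifP.
- move=> /andP[Hab Hw] ix jx Hix Hjx _ _ E.
  exact: (code_uniq _ _ Hab Hw Hix Hjx E).
Qed.

Lemma is_prefix_iff : w != [::] -> is_prefix_code C <-> (a != b) && pf a b w.
Proof.
move=> wne; split.
- move=> [Hc P]; case Ew: w wne => [|x t] // _.
  have Hab : a != b.
    apply/negP => /eqP Eab; have [H1 _] := P 0 1 isT isT.
    by move: H1; rewrite /= Eab eqxx /= => /(_ isT).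
  rewrite Hab /= /qab negb_or; apply/andP; split.
    apply/negP => /eqP Exa; have [H1 _] := P 0 2 isT isT.
    by move: H1; rewrite /= Ew Exa /= eqxx prefix0s => /(_ isT).
  apply/negP => /eqP Exb; have [H1 _] := P 1 2 isT isT.
  by move: H1; rewrite /= Ew Exb /= eqxx prefix0s => /(_ isT).
- move=> /andP[Hab Hp]; split.
    apply/is_code_iff => //; rewrite Hab /=; move: Hp; case: (w) => [|x t] //=.
    by rewrite negb_and => ->.
  move: Hp; case Ew: w => [|x t] //= Hx.
  move: Hx; rewrite /qab negb_or => /andP[Hxa Hxb].
  move=> i j Hi Hj; split; last by move=> <-; exact: prefix_refl.
  move: Hi Hj; case: i => [|[|[|i]]] //= _; case: j => [|[|[|j]]] //= _; rewrite ?Ew /=;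
    move=> H; exfalso; move: H; rewrite ?prefix0s ?prefixs0 ?andbT ?andbF /=.
  all: rewrite ?(eq_sym a x) ?(eq_sym b x) ?(eq_sym b a) ?(negbTE Hab) ?(negbTE Hxa) ?(negbTE Hxb) //.
Qed.
End Code.


Lemma mem_words n k t : (t \in words_of_len n k) = (size t == k).
Proof.
apply/mapP/eqP => [[u _ ->]|Ht]; first exact: size_tuple.
by exists (Tuple (introT eqP Ht)); rewrite ?mem_enum.
Qed.

Lemma uniq_words n k : uniq (words_of_len n k).
Proof. by rewrite map_inj_uniq ?enum_uniq //; exact: val_inj. Qed.

Lemma size_words n k : size (words_of_len n k) = n ^ k.
Proof. by rewrite size_map -cardE card_tuple card_ord. Qed.

Lemma words_perm n k : perm_eq (words_of_len n k.+1)
  [seq x :: t | x <- enum 'I_n, t <- words_of_len n k].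
Proof.
apply: uniq_perm; first exact: uniq_words.
  apply: allpairs_uniq; [exact: enum_uniq | exact: uniq_words |].
  by move=> [x1 t1] [x2 t2] _ _ /= [-> ->].
move=> t; rewrite mem_words; apply/eqP/allpairsP => [|[[x u] [_ /= Hu ->]]].
  case: t => [|x u] //= [Hu]; exists (x, u); split => //=; first by rewrite mem_enum.
  by rewrite mem_words Hu.
by move: Hu; rewrite mem_words /= => /eqP ->.
Qed.

Lemma count_words_S n k (P : pred (seq 'I_n)) : count P (words_of_len n k.+1) =
  sumn [seq count (fun t => P (x :: t)) (words_of_len n k) | x <- enum 'I_n].
Proof.
rewrite (permP (words_perm n k)) count_flatten -map_comp.
by congr sumn; apply: eq_map => x /=; rewrite count_map.
Qed.

Lemma sumn_mulr (T : Type) (s : seq T) (P : pred T) c :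
  sumn [seq (P x : nat) * c | x <- s] = count P s * c.
Proof. by elim: s => [|x s IH] //=; rewrite IH mulnDl. Qed.

Lemma sumn_const (T : Type) (s : seq T) c : sumn [seq c | _ <- s] = size s * c.
Proof. by elim: s => [|x s IH] //=; rewrite IH mulSn. Qed.

Lemma words0 n : words_of_len n 0 = [:: [::]].
Proof.
have := size_words n 0; rewrite expn0.
case E: (words_of_len n 0) => [|y [|z s]] //= _.
have : y \in words_of_len n 0 by rewrite E mem_head.
by rewrite mem_words size_eq0 => /eqP ->.
Qed.

Lemma count_all_words n (q : pred 'I_n) k :
  count (all q) (words_of_len n k) = count q (enum 'I_n) ^ k.
Proof.
elim: k => [|k IH]; first by rewrite words0 /=.
rewrite count_words_S expnS -IH -sumn_mulr; congr sumn; apply: eq_map => x /=.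
case: (q x) => /=; first by rewrite mul1n.
by rewrite mul0n count_pred0.
Qed.

Lemma count_pf_words n (a b : 'I_n) k :
  count (pf a b) (words_of_len n k.+1) = count (predC (qab a b)) (enum 'I_n) * n ^ k.
Proof.
rewrite count_words_S -sumn_mulr; congr sumn; apply: eq_map => x /=.
rewrite -(size_words n k) -count_predT.
by case: (qab a b x) => /=; [rewrite mul0n count_pred0 | rewrite mul1n].
Qed.

Lemma count_cand n m L (P : pred (seq (seq 'I_n))) : count P (candidates n (m :: L)) =
  sumn [seq count (fun C => P (v :: C)) (candidates n L) | v <- words_of_len n m].
Proof. by rewrite /= count_flatten -map_comp; congr sumn; apply: eq_map => v /=; rewrite count_map. Qed.

Lemma letters_sum n (F : seq 'I_n -> nat) :
  sumn [seq F v | v <- words_of_len n 1] = sumn [seq F [:: x] | x <- enum 'I_n].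
Proof.
rewrite (perm_sumn (perm_map F (words_perm n 0))) words0.
by elim: (enum 'I_n) => [|x s IH] //=; rewrite IH.
Qed.

Lemma count_q2 n (x y : 'I_n) : x != y -> count (qab x y) (enum 'I_n) = 2.
Proof.
move=> Hxy.
have := count_predUI (pred1 x) (pred1 y) (enum 'I_n).
rewrite (@eq_count _ (predI _ _) pred0); last first.
  by move=> z /=; apply/negP => /andP[/eqP -> /eqP E]; move: Hxy; rewrite E eqxx.
rewrite count_pred0 addn0 !count_uniq_mem ?enum_uniq // !mem_enum => E.
by rewrite (@eq_count _ _ (predU (pred1 x) (pred1 y))) // E.
Qed.

Lemma count_neq n (x : 'I_n) : count (fun y => x != y) (enum 'I_n) = n.-1.
Proof.
have := count_predC (pred1 x) (enum 'I_n).
rewrite count_uniq_mem ?enum_uniq // mem_enum => E.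
suff : forall m, size (enum 'I_n) = m -> count (fun y => x != y) (enum 'I_n) = m.-1.
  by apply; rewrite size_enum_ord.
move=> m <-; rewrite -E add1n /=.
by apply: eq_count => y /=; rewrite eq_sym.
Qed.

Lemma sumn_count0 (T : Type) (s : seq T) (P : pred T) :
  sumn [seq (P v : nat) + 0 | v <- s] = count P s.
Proof. by elim: s => //= v s ->; rewrite addn0. Qed.

Lemma card_UD_eq n k :
  card_UD n [:: 1; 1; k.+1] = n * (n.-1 * (n ^ k.+1 - 2 ^ k.+1)).
Proof.
rewrite /card_UD count_cand letters_sum.
set c := (n ^ k.+1 - 2 ^ k.+1).
rewrite (eq_map (g := fun=> n.-1 * c)); first by rewrite sumn_const size_enum_ord.
move=> x.
rewrite count_cand letters_sum -(count_neq _ x) -sumn_mulr.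
rewrite (eq_map (g := fun y => (x != y : nat) * c)) // => y.
rewrite count_cand /= (sumn_count0 _ _ (fun v => `[< is_code [:: [:: x]; [:: y]; v] >])).
rewrite (@eq_in_count _ _ (fun v => (x != y) && ~~ all (qab x y) v)); last first.
  move=> v; rewrite mem_words => /eqP Hv /=.
  have vne : v != [::] by rewrite -size_eq0 Hv.
  apply/idP/idP => [/asboolP/is_code_iff -> //| H].
  by apply/asboolP/is_code_iff.
case Exy: (x != y) => /=; last by rewrite count_pred0.
rewrite mul1n.
have := count_predC (all (qab x y)) (words_of_len n k.+1).
rewrite size_words count_all_words count_q2 //.
by rewrite /c => <-; rewrite addKn.
Qed.

Lemma card_PR_eq n k :
  card_PR n [:: 1; 1; k.+1] = n * (n.-1 * (n.-2 * n ^ k)).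
Proof.
rewrite /card_PR count_cand letters_sum.
set c := n.-2 * n ^ k.
rewrite (eq_map (g := fun=> n.-1 * c)); first by rewrite sumn_const size_enum_ord.
move=> x.
rewrite count_cand letters_sum -(count_neq _ x) -sumn_mulr.
rewrite (eq_map (g := fun y => (x != y : nat) * c)) // => y.
rewrite count_cand /= (sumn_count0 _ _ (fun v => `[< is_prefix_code [:: [:: x]; [:: y]; v] >])).
rewrite (@eq_in_count _ _ (fun v => (x != y) && pf x y v)); last first.
  move=> v; rewrite mem_words => /eqP Hv /=.
  have vne : v != [::] by rewrite -size_eq0 Hv.
  apply/idP/idP => [/asboolP/is_prefix_iff -> //| H].
  by apply/asboolP/is_prefix_iff.
case Exy: (x != y) => /=; last by rewrite count_pred0.
rewrite mul1n count_pf_words /c; congr (_ * _).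
have := count_predC (qab x y) (enum 'I_n).
rewrite count_q2 // size_enum_ord => E.
suff : forall m, m = n -> count (predC (qab x y)) (enum 'I_n) = m.-2 by apply.
by move=> m Em; rewrite -E in Em; rewrite Em add2n.
Qed.

Local Open Scope classical_set_scope.
Local Open Scope ring_scope.

Lemma rho_eq (R : realType) (n c : nat) : (2 < n)%N ->
  rho R n [:: 1%N; 1%N; c.+1] =
  ((n%:R - 2) / n%:R) / (1 - (2 / n%:R) ^+ c.+1).
Proof.
move=> Hn.
rewrite /rho card_UD_eq card_PR_eq.
have le2 : (2 ^ c.+1 <= n ^ c.+1)%N by rewrite leq_exp2r // ltnW.
rewrite !natrM natrB // !natrX.
have e1 : n.-1%:R = n%:R - 1 :> R by rewrite -subn1 natrB // ltnW // ltnW.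
have e2 : n.-2%:R = n%:R - 2 :> R by rewrite -subn2 natrB // ltnW.
rewrite e1 e2.
set N := n%:R.
have N0 : N != 0 by rewrite pnatr_eq0 -lt0n; case: (n) Hn.
have N1 : N - 1 != 0 by rewrite subr_eq0 pnatr_eq1; case: (n) Hn => [|[|]].
have lt2 : (2 : R) ^+ c.+1 < N ^+ c.+1.
  have : ((2 ^ c.+1)%:R : R) < (n ^ c.+1)%:R by rewrite ltr_nat ltn_exp2r.
  by rewrite !natrX.
have D0 : N ^+ c.+1 - 2 ^+ c.+1 != 0 by rewrite subr_eq0 gt_eqF.
rewrite expr_div_n.
have Nc : N ^+ c.+1 != 0 by rewrite expf_neq0.
rewrite exprS.
field.
by rewrite -/N -exprS D0 N0 N1 expf_neq0.
Qed.

Theorem theorem5 (R : realType) (n : nat) :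
  (2 < n)%N ->
  (fun c : nat => rho R n [:: 1%N; 1%N; c.+1]) @ \oo --> ((n%:R - 2) / n%:R : R).
Proof.
move=> Hn.
set K := (n%:R - 2) / n%:R : R.
set r := 2 / n%:R : R.
have -> : (fun c : nat => rho R n [:: 1%N; 1%N; c.+1]) = (fun c => K / (1 - r ^+ c.+1)).
  by apply: funext => c; exact: rho_eq.
have hr : `|r| < 1.
  have N0 : (0 : R) < n%:R by rewrite ltr0n; case: (n) Hn.
  rewrite ger0_norm ?divr_ge0 ?ler0n // ltr_pdivrMr // mul1r.
  by rewrite -[2]/(2%:R) ltr_nat.
have h1 : (fun c => r ^+ c.+1) @ \oo --> 0.
  by have := cvg_expr hr; rewrite -cvg_shiftS.
suff H : (fun c => K / (1 - r ^+ c.+1)) @ \oo --> K * (1 - 0)^-1.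
  by rewrite subr0 invr1 mulr1 in H.
apply: cvgM; first exact: cvg_cst.
apply: cvgV; first by rewrite subr0 oner_neq0.
apply: cvgB; first exact: cvg_cst.
exact: h1.
Qed.
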